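(* Let $k\ge 2$ be an integer, and for each $i=1,\dots,k$ let $K_i$ be either $\mathbb{R}$ or $\mathbb{T}$. Let $K=\prod_{i=1}^k K_i$ and for $i=1,\dots,k$ let $H_i=\{(x_1,\dots,x_k)\in K: x_i=0\}$. If $G$ is a dense subgroup of $K$ such that $G\cap H_i$ is not dense in $H_i$ for every $i=1,\dots,k$, then $G$ is zero-dimensional.
   Context: $\mathbb{T}=\mathbb{R}/\mathbb{Z}$ is the circle group written additively, with its usual compact topology; $K$ carries the product topology and $G$ the subspace topology. A space is zero-dimensional if it has a base of clopen sets. *)

(* Defs.v *)
From HB Require Import structures.
From mathcomp Require Import all_boot all_order all_algebra archimedean generic_quotient.
From mathcomp Require Import all_classical all_reals all_analysis.
Set Implicit Arguments. Unset Strict Implicit. Unset Printing Implicit Defensive.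
Import Order.TTheory GRing.Theory Num.Theory numFieldNormedType.Exports.
Local Open Scope classical_set_scope.
Local Open Scope ring_scope.
Local Open Scope quotient_scope.

Section Circle.
Variable R : realType.
Definition modZ (x y : R) : bool := (x - y) \is a Num.int.
Lemma modZ_equiv : equiv_class_of modZ.
Proof.
split.
- by move=> x; rewrite /modZ subrr rpred0.
- move=> x y; rewrite /modZ -opprB rpredN.
  by [].
- move=> y x z; rewrite /modZ => Hxy Hyz.
  have -> : x - z = (x - y) + (y - z) by rewrite addrA subrK.
  exact: rpredD.
Qed.
Canonical modZ_equivRel := EquivRelPack modZ_equiv.
Definition circle := {eq_quot modZ}.
HB.instance Definition _ := Quotient.on circle.
HB.instance Definition _ := Topological.copy circle (quotient_topology circle).
Definition circle_zero : circle := \pi_circle 0.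
Definition circle_add (a b : circle) : circle :=
  \pi_circle (repr a + repr b).
Definition circle_opp (a : circle) : circle := \pi_circle (- repr a).
End Circle.

(** The factors: [Kfactor R false] is the real line, [Kfactor R true] is the circle R/Z. *)
Definition Kfactor (R : realType) (b : bool) : topologicalType :=
  if b then (circle R : topologicalType) else (R : topologicalType).

Definition kzero (R : realType) (b : bool) : Kfactor R b :=
  if b as b' return Kfactor R b' then circle_zero R else (0 : R).
Definition kadd (R : realType) (b : bool) : Kfactor R b -> Kfactor R b -> Kfactor R b :=
  if b as b' return Kfactor R b' -> Kfactor R b' -> Kfactor R b'
  then @circle_add R else (fun x y : R => x + y).
Definition kopp (R : realType) (b : bool) : Kfactor R b -> Kfactor R b :=
  if b as b' return Kfactor R b' -> Kfactor R b'
  then @circle_opp R else (fun x : R => - x).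

Definition Kspace (R : realType) (k : nat) (c : 'I_k -> bool) : topologicalType :=
  prod_topology (fun i : 'I_k => Kfactor R (c i)).

Definition Kzero (R : realType) (k : nat) (c : 'I_k -> bool) : Kspace R c :=
  fun i => kzero R (c i).
Definition Kadd (R : realType) (k : nat) (c : 'I_k -> bool) (x y : Kspace R c) : Kspace R c :=
  fun i => kadd (x i) (y i).
Definition Kopp (R : realType) (k : nat) (c : 'I_k -> bool) (x : Kspace R c) : Kspace R c :=
  fun i => kopp (x i).

Definition is_subgroup (R : realType) (k : nat) (c : 'I_k -> bool) (G : set (Kspace R c)) :=
  G (Kzero R c) /\ forall x y, G x -> G y -> G (Kadd x (Kopp y)).

Definition Hset (R : realType) (k : nat) (c : 'I_k -> bool) (i : 'I_k) : set (Kspace R c) :=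
  [set x | x i = kzero R (c i)].

Definition zero_dim (T : topologicalType) :=
  forall (U : set T) (x : T), open U -> U x -> exists V : set T, [/\ clopen V, V x & V `<=` U].

(* Main.v *)
Require Import Defs.
From HB Require Import structures.
From mathcomp Require Import all_boot all_order all_algebra.
From mathcomp Require Import all_classical all_reals all_analysis.
Import numFieldNormedType.Exports.
Local Open Scope classical_set_scope.
Local Open Scope ring_scope.

From mathcomp Require Import archimedean generic_quotient.
From mathcomp Require Import ring lra zify.
Import Order.TTheory GRing.Theory Num.Theory.
Local Open Scope quotient_scope.

Lemma Kcvg (R : realType) (k : nat) (c : 'I_k -> bool) (F : set_system (Kspace R c))
  (y : Kspace R c) : Filter F ->
  (forall i, (fun f : Kspace R c => f i) @ F --> y i) -> F --> y.
Proof.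
move=> FF H.
have := @cvg_sup _ _ (fun i => Topological.class
    (initial_topology (fun f : (forall i, Kfactor R (c i)) => f i))) F y FF.
case=> _; apply => i A.
rewrite (@nbhsE (Topological.Pack (Topological.class
    (initial_topology (fun f : (forall i, Kfactor R (c i)) => f i))))) /=.
move=> [B [oB By] BA].
case: oB => B' oB' eB.
apply: (filterS BA).
rewrite -eB.
apply: (H i).
apply: open_nbhs_nbhs; split => //.
by rewrite -eB in By.
Qed.

Section S.
Variable R : realType.

Definition kP (b : bool) : R -> Kfactor R b :=
  if b as b' return R -> Kfactor R b' then (fun x => \pi_(circle R) x) else id.

Lemma piP (x y : R) : (\pi_(circle R) x = \pi_(circle R) y) <-> (x - y \is a Num.int).
Proof. split; [by move/eqmodP | by move=> h; apply/eqmodP]. Qed.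

Lemma repr_int (x : R) : (repr (\pi_(circle R) x) - x) \is a Num.int.
Proof. by apply/piP; rewrite reprK. Qed.

Lemma kP_surj b (y : Kfactor R b) : exists x, kP b x = y.
Proof. case: b y => y /=; [exists (repr y); exact: reprK | by exists y]. Qed.

Lemma kP_cont b : continuous (kP b).
Proof.
case: b => /=; last by move=> x; exact: cvg_id.
apply/continuousP => A oA; exact: oA.
Qed.

Lemma arith3 (x y u v w : R) : u - x \is a Num.int -> v - (- w) \is a Num.int ->
  w - y \is a Num.int -> x - y - (u + v) \is a Num.int.
Proof.
move=> h1 h2 h3.
have -> : x - y - (u + v) = - ((u - x) + (v - (- w)) - (w - y)) by ring.
by rewrite rpredN; apply: rpredB => //; apply: rpredD.
Qed.

Lemma kP_sub b x y : kP b (x - y) = Defs.kadd (kP b x) (Defs.kopp (kP b y)).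
Proof.
case: b => //=; rewrite /circle_add /circle_opp; apply/eqmodP; rewrite /Defs.modZ /=.
apply: arith3; apply: repr_int.
Qed.

Lemma kP0 b : kP b 0 = Defs.kzero R b.
Proof. by case: b. Qed.


Lemma min_pos {e1 e2 : R} : 0 < e1 -> 0 < e2 -> exists e, [/\ 0 < e, e <= e1 & e <= e2].
Proof.
move=> h1 h2; exists (Num.min e1 e2); split.
- by rewrite lt_min h1 h2.
- by rewrite ge_min lexx.
- by rewrite ge_min lexx orbT.
Qed.

Lemma nbhsR (x : R) (A : set R) : nbhs x A ->
  exists2 e, 0 < e & forall t, x - e < t -> t < x + e -> A t.
Proof.
move/nbhs_ballP => [e e0 sub]; exists e => // t h1 h2; apply: sub.
rewrite /ball /= ltr_distlC; apply/andP; split => //.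
Qed.

Lemma openR (A : set R) :
  (forall x, A x -> exists2 e, 0 < e & forall t, x - e < t -> t < x + e -> A t) -> open A.
Proof.
move=> H; rewrite openE => x Ax; have [e e0 h] := H x Ax; apply/nbhs_ballP.
exists e => // t; rewrite /ball /= ltr_distlC => /andP [h1 h2]; exact: h.
Qed.

Lemma open_circle (U : set (circle R)) :
  open ((fun x : R => \pi_(circle R) x) @^-1` U) -> open (U : set (Kfactor R true)).
Proof. by []. Qed.

Lemma open_img b (a c : R) :
  open [set y : Kfactor R b | exists t, [/\ a < t, t < c & kP b t = y]].
Proof.
case: b => /=.
- apply: open_circle; apply: openR => s [t [h1 h2 /eqmodP hi]].
  have hi2 : t - s \is a Num.int := hi.
  have e1' : 0 < t - a by rewrite subr_gt0.
  have e2' : 0 < c - t by rewrite subr_gt0.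
  have [e' [e0' e1'' e2'']] := min_pos e1' e2'.
  exists e' => // s' h3 h4; exists (s' + (t - s)); split; [lra|lra|].
  apply/eqmodP; change ((s' + (t - s)) - s' \is a Num.int).
  by have -> : s' + (t - s) - s' = t - s by ring.
- apply: openR => s [t [h1 h2 /= hts]]; subst s.
  have e1' : 0 < t - a by rewrite subr_gt0.
  have e2' : 0 < c - t by rewrite subr_gt0.
  have [e' [e0' e1'' e2'']] := min_pos e1' e2'.
  exists e' => // s' h3 h4; exists s'; split => //; lra.
Qed.


Lemma int_dich (x : R) : x \is a Num.int -> 0 <= x \/ x <= -1.
Proof.
move/intrP => [p ->]; case: (lerP 0 p) => hp.
- by left; rewrite ler0z.
- right; have hp' : p <= -1 by lia.
  by move: hp'; rewrite -(ler_int R) rmorphN1.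
Qed.

Lemma open_cimg b (a c : R) : c - a < 1 ->
  open [set y : Kfactor R b | ~ exists t, [/\ a <= t, t <= c & kP b t = y]].
Proof.
move=> hac; case: b => /=.
- apply: open_circle; apply: openR => s /= hs.
  set m := Num.floor (s - a).
  have hm1 := floor_le (s - a). have hm2 := floorD1_gt (s - a).
  rewrite -/m in hm1 hm2; rewrite intrD in hm2.
  set t1 := s - m%:~R.
  have hct : c < t1.
    rewrite ltNge; apply/negP => hle; apply: hs; exists t1; split => //.
    - rewrite /t1; lra.
    - apply/eqmodP; change (t1 - s \is a Num.int).
      by rewrite /t1 addrAC subrr add0r rpredN intr_int.
  have e1' : 0 < t1 - c by rewrite subr_gt0.
  have e2' : 0 < a - (t1 - 1) by rewrite /t1; lra.
  have [e' [e0' e1'' e2'']] := min_pos e1' e2'.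
  exists e' => // s' h3 h4 [t [ha hc /eqmodP hi]].
  have hi2 : t - s' + m%:~R \is a Num.int.
    by apply: rpredD => //; exact: intr_int.
  case: (int_dich _ hi2) => hh; rewrite /t1 in e1'' e2''; lra.
- apply: openR => s /= hs.
  case: (ltP s a) => h1.
  + have e1' : 0 < a - s by rewrite subr_gt0.
    exists (a - s) => // s' h3 h4 [t [ha hc hts]]; subst s'; lra.
  + case: (ltP c s) => h2.
    * have e1' : 0 < s - c by rewrite subr_gt0.
      exists (s - c) => // s' h3 h4 [t [ha hc hts]]; subst s'; lra.
    * by exfalso; apply: hs; exists s.
Qed.

End S.

Arguments kP {R} b _.
Arguments min_pos {R e1 e2}.
Arguments nbhsR {R x A}.
Arguments int_dich {R x}.
Section K.
Variables (R : realType) (k : nat) (c : 'I_k -> bool).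

Definition PK (x : 'I_k -> R) : Kspace R c := fun j => kP (c j) (x j).

Lemma PK_sub x y : PK (fun j => x j - y j) = Defs.Kadd (PK x) (Defs.Kopp (PK y)).
Proof. apply: functional_extensionality_dep => j; exact: (@kP_sub R (c j)). Qed.

Lemma PK_surj (y : Kspace R c) : exists x, PK x = y.
Proof.
have [x hx] := choice (fun j => @kP_surj R (c j) (y j)).
by exists x; apply: functional_extensionality_dep => j; exact: hx.
Qed.

Lemma Kproj_open j (A : set (Kfactor R (c j))) : open A -> open [set y : Kspace R c | A (y j)].
Proof.
move=> oA.
have h := @proj_continuous _ (fun i => Kfactor R (c i)) j.
have h' : continuous (fun f : Kspace R c => f j) := h.
exact: (proj1 (continuousP _) h' A oA).
Qed.


Lemma Kbox x (U : set (Kspace R c)) : nbhs (PK x) U ->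
  exists2 d, 0 < d & forall y, (forall j, x j - d < y j /\ y j < x j + d) -> U (PK y).
Proof.
move=> hU.
pose B := fun d : R => [set PK y | y in [set y | forall j, x j - d < y j /\ y j < x j + d]].
have FF : Filter (filter_from [set d : R | 0 < d] B).
  apply: filter_from_filter; first by exists 1 => /=; exact: ltr01.
  move=> d1 d2 h1 h2; have [e [e0 e1 e2]] := min_pos h1 h2; exists e => //.
  move=> z [y hy <-]; split; exists y => // j; have := hy j; lra.
have cv : filter_from [set d : R | 0 < d] B --> PK x.
  apply: Kcvg => i N hN.
  have := @kP_cont R (c i) (x i) N hN.
  move/nbhsR => [e e0 he]; exists e => //.
  move=> z [y hy <-] /=; have := hy i => -[h1 h2]; exact: he.
have [d d0 hd] := cv U hU.
by exists d => // y hy; apply: hd; exists y.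
Qed.

Lemma open_forall (f : 'I_k -> set (Kspace R c)) : (forall j, open (f j)) ->
  open [set y | forall j, f j y].
Proof.
move=> hf; rewrite openE => y hy.
have := @filter_forall _ _ f (nbhs y) _ (fun j => open_nbhs_nbhs (conj (hf j) (hy j))).
move=> h; exact (h (nbhs_filter y)).
Qed.

Lemma open_exists (f : 'I_k -> set (Kspace R c)) : (forall j, open (f j)) ->
  open [set y | exists j, f j y].
Proof.
move=> hf; rewrite openE => y [j hj].
apply: (filterS _ (open_nbhs_nbhs (conj (hf j) hj))) => z hz; by exists j.
Qed.

Lemma open_Kimg (a b : 'I_k -> R) :
  open [set y : Kspace R c | forall j, exists t, [/\ a j < t, t < b j & kP (c j) t = y j]].
Proof.
apply: (open_forall (fun j (y : Kspace R c) => exists t, [/\ a j < t, t < b j & kP (c j) t = y j])) => j.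
exact: (@Kproj_open j [set z | exists t, [/\ a j < t, t < b j & kP (c j) t = z]] (open_img R (c j) (a j) (b j))).
Qed.

Lemma open_Kcimg (a b : 'I_k -> R) : (forall j, b j - a j < 1) ->
  open [set y : Kspace R c | exists j, ~ exists t, [/\ a j <= t, t <= b j & kP (c j) t = y j]].
Proof.
move=> hab.
apply: (open_exists (fun j (y : Kspace R c) => ~ exists t, [/\ a j <= t, t <= b j & kP (c j) t = y j])) => j.
exact: (@Kproj_open j [set z | ~ exists t, [/\ a j <= t, t <= b j & kP (c j) t = z]] (@open_cimg R (c j) (a j) (b j) (hab j))).
Qed.

End K.

Section Core.
Variables (R : realType) (k : nat).

Lemma minfam (r : 'I_k -> R) (rho : R) : (forall i, 0 < r i) -> 0 < rho ->
  exists d, [/\ 0 < d, d <= rho & forall i, d <= r i].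
Proof.
move=> hr hrho.
suff H : forall s : seq 'I_k, exists d, [/\ 0 < d, d <= rho & forall i, i \in s -> d <= r i].
  have [d [h1 h2 h3]] := H (enum 'I_k); exists d; split => // i; apply: h3; by rewrite mem_enum.
elim => [|i s [d [h1 h2 h3]]]; first by exists rho; split.
exists (Num.min d (r i)); split.
- by rewrite lt_min h1 hr.
- by rewrite ge_min h2.
- move=> j; rewrite inE => /orP [/eqP ->|hj]; first by rewrite ge_min lexx orbT.
  by rewrite ge_min h3.
Qed.

Lemma core (Gt : set ('I_k -> R))
 (Gsub : forall x y, Gt x -> Gt y -> Gt (fun j => x j - y j))
 (Gd : forall z d, 0 < d -> exists g, Gt g /\ forall j, z j - d < g j /\ g j < z j + d)
 (Hn : forall i, exists w : 'I_k -> R, exists r, [/\ 0 < r, w i = 0 &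
     forall x, x i = 0 -> (forall j, w j - r < x j /\ x j < w j + r) -> ~ Gt x])
 (x0 : 'I_k -> R) (rho : R) (hrho : 0 < rho) :
 exists a b : 'I_k -> R,
   (forall j, [/\ x0 j - rho < a j, a j < x0 j, x0 j < b j, b j < x0 j + rho & b j - a j < 1]) /\
   forall y, Gt y -> (forall j, a j <= y j /\ y j <= b j) -> forall j, a j < y j /\ y j < b j.
Proof.
have [w hw] := choice Hn.
have [r hr] := choice hw.
have hr0 : forall i, 0 < r i / 2.
  by move=> i; have [h _ _] := hr i; rewrite divr_gt0.
have h12 : 0 < Num.min rho (1/2) by rewrite lt_min hrho; apply/andP; split => //; lra.
have [d [d0 drho dr]] := @minfam (fun i => r i / 2) _ hr0 h12.
have drho' : d <= rho by move: drho; rewrite le_min => /andP [].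
have d12 : d <= 1/2 by move: drho; rewrite le_min => /andP [].
have hg : forall i, exists gab : ('I_k -> R) * ('I_k -> R),
   [/\ Gt gab.1, Gt gab.2,
       x0 i - d < gab.1 i /\ gab.1 i < x0 i,
       x0 i < gab.2 i /\ gab.2 i < x0 i + d &
       forall j, j != i -> (x0 j - w i j - d < gab.1 j /\ gab.1 j < x0 j - w i j + d) /\
                          (x0 j - w i j - d < gab.2 j /\ gab.2 j < x0 j - w i j + d)].
  move=> i.
  have d20 : 0 < d / 2 by rewrite divr_gt0.
  have [ga [Ga hga]] := Gd (fun j => if j == i then x0 i - d / 2 else x0 j - w i j) (d / 2) d20.
  have [gb [Gb hgb]] := Gd (fun j => if j == i then x0 i + d / 2 else x0 j - w i j) (d / 2) d20.
  exists (ga, gb); split => //=.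
  - by have := hga i; rewrite eqxx; lra.
  - by have := hgb i; rewrite eqxx; lra.
  - move=> j /negbTE hj; have := hga j; have := hgb j; rewrite hj; lra.
have [g hg'] := choice hg.
exists (fun i => (g i).1 i), (fun i => (g i).2 i); split.
  move=> j; have [_ _ [h1 h2] [h3 h4] _] := hg' j; split; lra.
move=> y Gy hy j.
have [hrj wjj hnj] := hr j.
have [Ga Gb _ _ hoth] := hg' j.
have hdr := dr j.
have key : forall gg, Gt gg -> y j = gg j ->
    (forall m, m != j -> x0 m - w j m - d < gg m /\ gg m < x0 m - w j m + d) -> False.
  move=> gg Ggg hyg hgg.
  apply: (hnj (fun m => y m - gg m)); last exact: Gsub.
    by rewrite /= hyg subrr.
  move=> m /=; have [->|hm] := eqVneq m j.
    rewrite hyg subrr wjj; lra.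
  have := hgg m hm; have := hy m.
  have [h1 h2 h3 h4 _] := hg' m.
  have [_ _ [h5 h6] [h7 h8] _] := hg' m.
  lra.
have [h1 h2] := hy j.
split.
- case: (ltP ((g j).1 j) (y j)) => // hle; exfalso.
  apply: (key (g j).1 Ga); first by apply/le_anti/andP; split.
  by move=> m hm; have [] := hoth m hm.
- case: (ltP (y j) ((g j).2 j)) => // hle; exfalso.
  apply: (key (g j).2 Gb); first by apply/le_anti/andP; split.
  by move=> m hm; have [] := hoth m hm.
Qed.

End Core.

Local Close Scope quotient_scope.

Theorem theorem4p1 (R : realType) (k : nat) (c : 'I_k -> bool) (G : set (Kspace R c)) :
  (2 <= k)%N ->
  is_subgroup G ->
  dense G ->
  (forall i : 'I_k,
     ~ dense (set_val @^-1` G : set (set_type (@Hset R k c i)))) ->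
  zero_dim (set_type G).
Proof.
move=> _ [G0 Gsub] Gdense Hnd.
pose Gt := [set x : 'I_k -> R | G (@PK R k c x)].
have GtSub : forall x y, Gt x -> Gt y -> Gt (fun j => x j - y j).
  by move=> x y hx hy; rewrite /Gt /= PK_sub; apply: Gsub.
have GtD : forall z d, 0 < d -> exists g, Gt g /\ forall j, z j - d < g j /\ g j < z j + d.
  move=> z d d0.
  have oO := @open_Kimg R k c (fun j => z j - d) (fun j => z j + d).
  have ne : [set y : Kspace R c | forall j, exists t, [/\ z j - d < t, t < z j + d & kP (c j) t = y j]] !=set0.
    by exists (@PK R k c z) => j; exists (z j); split => //; lra.
  have [y [Oy Gy]] := Gdense _ ne oO.
  have [t ht] := choice Oy.
  exists t; split.
    rewrite /Gt /=; suff -> : @PK R k c t = y by [].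
    by apply: functional_extensionality_dep => j; have [_ _ h] := ht j; exact h.
  by move=> j; have [h1 h2 _] := ht j.
have Hn : forall i, exists w : 'I_k -> R, exists r, [/\ 0 < r, w i = 0 &
     forall x, x i = 0 -> (forall j, w j - r < x j /\ x j < w j + r) -> ~ Gt x].
  move=> i; apply: contrapT => hno; apply: (Hnd i) => O [h hO] oO.
  apply: contrapT => hempty.
  case: oO => O' oO' eO.
  have hO' : O' (val h) by rewrite -eO in hO.
  have hH : val h i = Defs.kzero R (c i) by have := set_mem (valP h).
  have [x hx] := @PK_surj R k c (val h).
  pose x' := fun j => if j == i then 0 else x j.
  have hx' : @PK R k c x' = val h.
    apply: functional_extensionality_dep => j; rewrite /PK /x'.
    case: eqVneq => [->|_]; first by rewrite kP0 hH.
    by rewrite -hx.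
  have [d d0 hd] := @Kbox R k c x' O' (open_nbhs_nbhs (conj oO' (eq_ind_r O' hO' hx'))).
  apply: hno; exists x', d; split => //; first by rewrite /x' eqxx.
  move=> y yi0 hy Gy.
  have Hy : Hset i (@PK R k c y) by rewrite /Hset /= /PK yi0 kP0.
  apply: hempty; exists (exist _ (@PK R k c y) (mem_set Hy)); split => /=.
    by rewrite -eO /=; apply: hd.
  exact: Gy.
move=> U x oU Ux.
case: oU => U' oU' eU.
have hU' : U' (val x) by rewrite -eU in Ux.
have [xt hxt] := @PK_surj R k c (val x).
rewrite -hxt in hU'.
have [rho rho0 hrho] := @Kbox R k c xt U' (open_nbhs_nbhs (conj oU' hU')).
have [a [b [hab hcore]]] := @core R k Gt GtSub GtD Hn xt rho rho0.
pose Vo := [set y : Kspace R c | forall j, exists t, [/\ a j < t, t < b j & kP (c j) t = y j]].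
pose Wc := [set y : Kspace R c | exists j, ~ exists t, [/\ a j <= t, t <= b j & kP (c j) t = y j]].
have oVo : open Vo := @open_Kimg R k c a b.
have oWc : open Wc.
  apply: (@open_Kcimg R k c a b) => j; by have [] := hab j.
exists (set_val @^-1` Vo : set (set_type G)); split.
- split; first by exists Vo.
  have -> : (set_val @^-1` Vo : set (set_type G)) = ~` (set_val @^-1` Wc).
    apply/seteqP; split => g /=.
      move=> hg [j hj]; apply: hj; have [t [h1 h2 h3]] := hg j.
      by exists t; split => //; apply: ltW.
    move=> hg.
    have hg' : forall j, exists t, [/\ a j <= t, t <= b j & kP (c j) t = val g j].
      move=> j; apply: contrapT => hj; apply: hg; by exists j.
    have [t ht] := choice hg'.
    have hPt : @PK R k c t = val g.
      by apply: functional_extensionality_dep => j; have [_ _ h] := ht j; exact h.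
    have Gtt : Gt t by rewrite /Gt /= hPt; exact: (set_mem (valP g)).
    have := hcore t Gtt (fun j => let: And3 h1 h2 _ := ht j in conj h1 h2).
    move=> hin j; have [h1 h2] := hin j; exists (t j); split => //.
    by have [_ _ h] := ht j.
  apply: open_closedC; by exists Wc.
- move=> j /=; exists (xt j); have [h1 h2 h3 h4 _] := hab j; split => //.
  exact: (congr1 (fun f => f j) hxt).
- move=> g /= hg; rewrite -eU /=.
  have [t ht] := choice hg.
  have hPt : @PK R k c t = val g.
    by apply: functional_extensionality_dep => j; have [_ _ h] := ht j; exact h.
  suff : U' (@PK R k c t) by rewrite hPt => h; exact h.
  apply: hrho => j.
  have [h1 h2 _] := ht j; have [h3 h4 h5 h6 _] := hab j; lra.
Qed.
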